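(* Let $G=(V,E)$ be a finite connected undirected graph and let $M \subseteq V$ be the set of marked vertices, where the subgraph of $G$ induced by $M$ is connected. Suppose that the subgraph of $G$ induced by $V \setminus M$ is disconnected. Then the quantum walk search on $G$ with marked set $M$ (as described in the context) has a stationary state.
   Context: Quantum walk search model: the Hilbert space has orthonormal basis $\{|u,v\rangle : \{u,v\}\in E\}$ (one basis vector per arc, i.e. per ordered pair of adjacent vertices). For a vertex $u$ with neighbourhood $N(u)$, let $|s_u\rangle = \frac{1}{\sqrt{\deg_G(u)}}\sum_{v\in N(u)}|u,v\rangle$ and $G_u = 2|s_u\rangle\langle s_u| - I$ (Grover diffusion) acting on $\mathrm{span}\{|u,v\rangle : v\in N(u)\}$. The coin $C$ acts as $G_u$ on the arcs leaving each unmarked vertex $u\notin M$ and as $-G_u$ on the arcs leaving each marked vertex $u\in M$; the flip-flop shift is $S|u,v\rangle = |v,u\rangle$; one step of the walk is $U = SC$. A stationary state is a nonzero vector $|\psi\rangle$ with $U|\psi\rangle = |\psi\rangle$. *)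

(* Defs.v *)
From HB Require Import structures.
From mathcomp Require Import all_boot all_order all_algebra all_field.
Set Implicit Arguments. Unset Strict Implicit. Unset Printing Implicit Defensive.
Import Order.TTheory GRing.Theory Num.Theory.
Local Open Scope ring_scope.

(* A finite simple graph is a symmetric irreflexive relation e on a finType V. *)
Section QuantumWalk.
Variables (V : finType) (e : rel V).

(* Arcs: ordered pairs (u,v) of adjacent vertices; basis of the Hilbert space. *)
Definition arc : finType := {p : V * V | e p.1 p.2}.

Definition deg (u : V) : nat := #|[set v | e u v]|.

(* Grover diffusion G_u = 2|s_u><s_u| - I on arcs leaving u, with
   |s_u> = deg(u)^{-1/2} sum_{v in N(u)} |u,v>; hence
   (G_u psi)(u,v) = 2/deg(u) * sum_{w in N(u)} psi(u,w) - psi(u,v). *)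
Definition coin (M : {set V}) (psi : {ffun arc -> algC}) : {ffun arc -> algC} :=
  [ffun a : arc =>
     let u := (val a).1 in
     (if u \in M then -1 else 1) *
       (2 / (deg u)%:R * (\sum_(b : arc | (val b).1 == u) psi b) - psi a)].

(* Flip-flop shift S|u,v> = |v,u>, i.e. (S phi)(u,v) = phi(v,u).
   (The [None] branch never occurs for a symmetric e.) *)
Definition shift (phi : {ffun arc -> algC}) : {ffun arc -> algC} :=
  [ffun a : arc =>
     match (insub ((val a).2, (val a).1) : option arc) return algC with
     | Some b => phi b
     | None => 0
     end].

Definition walk (M : {set V}) (psi : {ffun arc -> algC}) : {ffun arc -> algC} :=
  shift (coin M psi).

Definition has_stationary_state (M : {set V}) : Prop :=
  exists psi : {ffun arc -> algC}, psi != 0 /\ walk M psi = psi.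

Definition induced (A : {set V}) : rel V :=
  fun x y => [&& e x y, x \in A & y \in A].

Definition induced_connected (A : {set V}) : Prop :=
  forall x y, x \in A -> y \in A -> connect (induced A) x y.

End QuantumWalk.

(* Main.v *)
Require Import Defs.
From HB Require Import structures.
From mathcomp Require Import all_boot all_order all_algebra all_field.
From mathcomp Require Import ring.
Set Implicit Arguments. Unset Strict Implicit. Unset Printing Implicit Defensive.
Import Order.TTheory GRing.Theory Num.Theory.
Local Open Scope ring_scope.

Lemma sum_arc (V : finType) (e : rel V) v (H : V -> V -> algC) :
  \sum_(b : Defs.arc e | (val b).1 == v) H (val b).1 (val b).2 = \sum_(w | e v w) H v w.
Proof.
have -> : \sum_(w | e v w) H v w = \sum_(u | u == v) \sum_(w | e u w) H u w.
  by rewrite big_pred1_eq.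
rewrite pair_big_dep /=.
rewrite (reindex_omap (val : Defs.arc e -> V * V) insub); last first.
  move=> [u w] /andP[_ euw] /=; by rewrite insubT.
apply: eq_bigl => -[[u w] h] /=.
rewrite insubT /=.
by rewrite (_ : e u w = true) // andbT eqxx andbT.
Qed.

Definition Dsum (V : finType) (e : rel V) (M : {set V}) (G : V -> V -> algC) v :=
  \sum_(w | e v w) (if w \in M then G v w else 0).

Lemma Dsum_lin (V : finType) (e : rel V) M F1 F2 (c : algC) v :
  Dsum e M (fun a b => F1 a b + c * F2 a b) v = Dsum e M F1 v + c * Dsum e M F2 v.
Proof.
rewrite /Dsum mulr_sumr -big_split; apply eq_bigr => w _.
by case: (w \in M) => /=; rewrite ?mulr0 ?addr0.
Qed.

Lemma Dsum_big (V : finType) (e : rel V) M (I : finType) (A : {pred I})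
   (c : I -> algC) (G : I -> V -> V -> algC) v :
  Dsum e M (fun a b => \sum_(u in A) c u * G u a b) v =
  \sum_(u in A) c u * Dsum e M (G u) v.
Proof.
rewrite /Dsum.
transitivity (\sum_(w | e v w) \sum_(u in A) c u * (if w \in M then G u v w else 0)).
  apply eq_bigr => w _; case: ifP => _ //.
  by rewrite big1 // => u _; rewrite mulr0.
rewrite exchange_big; apply eq_bigr => u _; by rewrite mulr_sumr.
Qed.

Lemma sum_pick (V : finType) (P : pred V) (M : {set V}) y :
  \sum_(w | P w) (if w \in M then (if w == y then 1 else 0) else 0) =
  (if P y && (y \in M) then 1 else 0 : algC).
Proof.
rewrite big_mkcond (bigD1 y) //= eqxx big1 => [|w /negbTE ->]; last first.
  by case: ifP => //; case: ifP.
by rewrite addr0; case: (P y); case: (y \in M).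
Qed.

Definition goodG (V : finType) (e : rel V) (M : {set V}) m0 x
  (Gs : {ffun V * V -> algC} * algC) :=
  [/\ forall v w, Gs.1 (v, w) = Gs.1 (w, v), Gs.2 * Gs.2 = 1 &
      forall v, Dsum e M (fun a b => Gs.1 (a, b)) v =
         (if v == m0 then 1 else 0) - Gs.2 * (if v == x then 1 else 0)].

Lemma goodG_step (V : finType) (e : rel V) (e_sym : symmetric e) (e_irr : irreflexive e)
   M m0 x y Gs : induced e M x y -> goodG e M m0 x Gs ->
   goodG e M m0 y ([ffun p => Gs.1 p + Gs.2 *
        ((if (p.1 == x) && (p.2 == y) then 1 else 0) +
         (if (p.1 == y) && (p.2 == x) then 1 else 0))], - Gs.2).
Proof.
case: Gs => G s /and3P[exy xM yM] [/= Gsym ss DG]; split => /=.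
- move=> v w; rewrite !ffunE /= Gsym (andbC (w == x)) (andbC (w == y)); congr (_ + _ * _); exact: addrC.
- by rewrite mulrNN.
move=> v.
have nxy : (x == y) = false.
  by apply/negbTE/eqP => hxy; move: exy; rewrite hxy e_irr.
have DE : Dsum e M (fun a b => (if (a == x) && (b == y) then 1 else 0) +
            (if (a == y) && (b == x) then 1 else 0)) v =
          (if v == x then 1 else 0) + (if v == y then 1 else 0).
  rewrite /Dsum; case: (v =P x) => [->|nvx].
    rewrite nxy /= addr0.
    under eq_bigr => w _ do rewrite addr0.
    by rewrite sum_pick exy yM.
  case: (v =P y) => [->|nvy].
    rewrite /= add0r.
    under eq_bigr => w _ do rewrite add0r.
    by rewrite sum_pick e_sym exy xM.
  rewrite /= addr0.
  by rewrite big1 // => w _; case: ifP => _ //; rewrite addr0.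
transitivity (Dsum e M (fun a b => G (a, b) + s * ((if (a == x) && (b == y) then 1 else 0) +
            (if (a == y) && (b == x) then 1 else 0))) v).
  by apply eq_bigr => w _; rewrite ffunE.
rewrite Dsum_lin DG DE.
case: (v =P x) => [->|nvx]; first by rewrite eq_sym nxy ?(mulr0, mulr1, addr0, add0r, oppr0, subr0, subrK).
by rewrite ?(mulr0, mulr1, addr0, add0r, oppr0, subr0, mulNr, opprK).
Qed.

Lemma goodG_path (V : finType) (e : rel V) (e_sym : symmetric e) (e_irr : irreflexive e)
   M m0 : forall p x Gs, path (induced e M) x p -> goodG e M m0 x Gs ->
   exists Gs', goodG e M m0 (last x p) Gs'.
Proof.
elim => [|y p IH] x Gs /=; first by eauto.
move=> /andP[hxy hp] hG; exact: IH hp (goodG_step e_sym e_irr hxy hG).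
Qed.

Lemma goodG_exists (V : finType) (e : rel V) (e_sym : symmetric e) (e_irr : irreflexive e)
   M (hM : induced_connected e M) m0 (hm0 : m0 \in M) u :
   u \in M -> exists Gs, goodG e M m0 u Gs.
Proof.
move=> hu; have /connectP[p hp ->] := hM m0 u hm0 hu.
apply: (goodG_path e_sym e_irr (Gs := ([ffun _ => 0], 1)) hp).
split => /=.
- by move=> v w; rewrite !ffunE.
- by rewrite mulr1.
move=> v; rewrite /Dsum big1 => [|w _]; last by rewrite ffunE; case: ifP.
by rewrite mul1r subrr.
Qed.

Theorem theorem3 (V : finType) (e : rel V)
  (e_sym : symmetric e) (e_irr : irreflexive e)
  (G_conn : forall x y : V, connect e x y)
  (M : {set V})
  (M_conn : induced_connected e M)
  (VM_disconn : ~ induced_connected e (~: M)) :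
  has_stationary_state e M.
Proof.
set r := induced e (~: M).
have r_sym : symmetric r.
  by move=> a b; rewrite /r /induced e_sym (andbC (a \in _)).
have [x [y [hx hy hxy]]] : exists x y, [/\ x \in ~: M, y \in ~: M & ~~ connect r x y].
  case: (boolP [exists x, exists y, [&& x \in ~: M, y \in ~: M & ~~ connect r x y]]).
    by move=> /existsP[x /existsP[y /and3P[? ? ?]]]; exists x, y.
  move=> H; exfalso; apply: VM_disconn => a b ha hb; apply/negPn.
  move: H; rewrite negb_exists => /forallP/(_ a); rewrite negb_exists => /forallP/(_ b).
  by rewrite ha hb.
have [m0 hm0] : exists m0, m0 \in M.
  case: (set_0Vmem M) => [M0|[m0 hm0]]; last by exists m0.
  exfalso; move/negP: hxy; apply.
  rewrite (@eq_connect _ r e) ?G_conn // => a b.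
  by rewrite /r /induced M0 setC0 !inE; case: (e a b).
have hex : forall u, exists Gs, u \in M -> goodG e M m0 u Gs.
  move=> u; case: (boolP (u \in M)) => hu.
    by have [Gs ?] := goodG_exists e_sym e_irr M_conn hm0 hu; exists Gs.
  by exists ([ffun _ => 0], 1).
have [sG hsG] := fin_all_exists hex.
pose chi1 (w : V) : algC := if connect r x w then 1 else 0.
pose chi2 (w : V) : algC := if connect r y w then 1 else 0.
pose Nf (f : V -> algC) u := \sum_(w | e u w) (if w \in M then 0 else f w).
pose phi (f : V -> algC) := \sum_(u in M) (sG u).2 * f u.
pose phi1 := phi (Nf chi1). pose phi2 := phi (Nf chi2).
pose a : algC := if phi1 == 0 then 1 else phi2.
pose b : algC := if phi1 == 0 then 0 else - phi1.
pose alpha w := a * chi1 w + b * chi2 w.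
pose h u := - Nf alpha u.
pose Gf v w := \sum_(u in M) (- (sG u).2 * h u) * (sG u).1 (v, w).
pose F u w := if u \notin M then alpha u else if w \notin M then alpha w else Gf u w.
have NL : forall u, Nf alpha u = a * Nf chi1 u + b * Nf chi2 u.
  move=> u; rewrite /Nf !mulr_sumr -big_split; apply: eq_bigr => w _.
  by case: ifP => _ /=; rewrite ?mulr0 ?addr0.
have K1 : phi (Nf alpha) = 0.
  have -> : phi (Nf alpha) = a * phi1 + b * phi2.
    rewrite /phi1 /phi2 /phi !mulr_sumr -big_split; apply: eq_bigr => u _.
    by rewrite NL mulrDr !mulrA (mulrC _ a) (mulrC _ b).
  rewrite /a /b; case: ifP => [/eqP -> | _]; first by rewrite ?(mulr0, mul0r, addr0).
  by rewrite mulNr (mulrC phi2) subrr.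
have alg1 : forall (s n d : algC), s * s = 1 -> (- s * - n) * (d - s * 1) = d * (s * n) + - n.
  move=> s n d ss; rewrite mulr1.
  have -> : (- s * - n) * (d - s) = d * (s * n) - (s * s) * n by ring.
  by rewrite ss mul1r.
have alg0 : forall (s n d : algC), (- s * - n) * (d - s * 0) = d * (s * n) + 0.
  by move=> s n d; rewrite mulr0 subr0 addr0; ring.
have K2 : forall v, v \in M -> \sum_(w | e v w) F v w = 0.
  move=> v hv.
  have -> : \sum_(w | e v w) F v w = Dsum e M Gf v + Nf alpha v.
    rewrite /Dsum /Nf -big_split; apply: eq_bigr => w _; rewrite /F hv /=.
    by case: (w \in M) => /=; rewrite ?addr0 ?add0r.
  have -> : Dsum e M Gf v = \sum_(u in M) (- (sG u).2 * h u) *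
                 Dsum e M (fun a b => (sG u).1 (a, b)) v.
    exact: (Dsum_big e M (mem M) (fun u => - (sG u).2 * h u) (fun u a b => (sG u).1 (a, b)) v).
  have -> : \sum_(u in M) (- (sG u).2 * h u) * Dsum e M (fun a b => (sG u).1 (a, b)) v
     = (if v == m0 then 1 else 0) * phi (Nf alpha) + \sum_(u in M) (if v == u then - Nf alpha u else 0).
    rewrite /phi mulr_sumr -big_split; apply: eq_bigr => u hu.
    case: (hsG u hu) => _ ss ->.
    rewrite /h; case: (v == u); [exact: alg1 | exact: alg0].
  rewrite K1 mulr0 add0r (bigD1 v) //= eqxx big1 ?addr0 ?addNr // => u /andP[_ /negbTE].
  by rewrite eq_sym => ->.
have cstep : forall z u v, u \notin M -> v \notin M -> e u v -> connect r z u -> connect r z v.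
  move=> z u v hu hv huv hzu; apply: (connect_trans hzu); apply: connect1.
  by rewrite /r /induced huv !inE hu hv.
have K3 : forall u v, u \notin M -> v \notin M -> e u v -> alpha u = alpha v.
  move=> u v hu hv huv.
  have huv' : e v u by rewrite e_sym.
  have E1 : connect r x u = connect r x v.
    by apply/idP/idP; [apply: cstep hu hv huv | apply: cstep hv hu huv'].
  have E2 : connect r y u = connect r y v.
    by apply/idP/idP; [apply: cstep hu hv huv | apply: cstep hv hu huv'].
  by rewrite /alpha /chi1 /chi2 E1 E2.
have arcout : forall z, z \notin M -> exists w, e z w.
  move=> z hz; have /connectP[p hp hl] := G_conn z m0.
  case: p hp hl => [_ hl|w p /= /andP[hzw _] _]; last by exists w.
  by move: hz; rewrite /= in hl; rewrite -hl hm0.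
exists [ffun c : Defs.arc e => F (val c).1 (val c).2]; split.
  apply/eqP => H0.
  have hx' : x \notin M by rewrite inE in hx.
  have hy' : y \notin M by rewrite inE in hy.
  have [wx hxw] := arcout x hx'.
  have [wy hyw] := arcout y hy'.
  have := congr1 (fun f : {ffun Defs.arc e -> algC} => f (Sub (x, wx) hxw : Defs.arc e)) H0.
  have := congr1 (fun f : {ffun Defs.arc e -> algC} => f (Sub (y, wy) hyw : Defs.arc e)) H0.
  rewrite !ffunE /= /F hx' hy' /= /alpha /chi1 /chi2 !connect0.
  have nyx : connect r y x = false.
    by apply/negbTE; apply: contra hxy; rewrite (sym_connect_sym r_sym).
  rewrite nyx (negbTE hxy) ?(mulr1, mulr0, addr0, add0r) => hb ha.
  move: ha hb; rewrite /a /b; case: ifP => [_|/negbT nz]; first by move/eqP; rewrite oner_eq0.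
  by move=> _ /eqP; rewrite oppr_eq0 (negbTE nz).
apply/ffunP => -[[u v] huv].
have hvu : e v u by rewrite e_sym.
rewrite /walk /shift !ffunE /=.
rewrite (insubT (fun p : V * V => e p.1 p.2) (x := (v, u)) hvu) /coin ffunE /=.
under eq_bigr => c _ do rewrite ffunE.
rewrite (sum_arc e v F) ffunE /=.
case: (boolP (v \in M)) => hv.
  rewrite K2 // mulr0 sub0r mulN1r opprK /F hv /=.
  case: (boolP (u \in M)) => hu //=.
  rewrite /Gf; apply: eq_bigr => w hw.
  by case: (hsG w hw) => Gsym _ _; rewrite Gsym.
have -> : \sum_(w | e v w) F v w = (deg e v)%:R * alpha v.
  rewrite /F hv /=.
  rewrite (eq_bigl (fun w => w \in [set w | e v w])) => [|w]; last by rewrite inE.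
  by rewrite sumr_const mulr_natl.
have dn0 : (deg e v)%:R != 0 :> algC.
  rewrite pnatr_eq0 -lt0n; apply/card_gt0P; exists u; by rewrite inE.
rewrite mul1r mulrA divfK //.
have -> : F v u = alpha v by rewrite /F hv.
have -> : 2 * alpha v - alpha v = alpha v by ring.
rewrite /F hv /=; case: (boolP (u \in M)) => hu //=.
by apply: K3.
Qed.
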